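(* In the network model described in the context, let $\pi$ be an admissible cyclic policy and $f_i\in\mathcal{F}$. All packets of flow $f_i$ meet their deadlines under $\pi$ if and only if, for every finite horizon $T$, \[ \max_{0\le t\le T}\ \sum_{e\in\mathcal{T}^{(i)}} Q_{i,e}^{\pi}(t)\le \lambda_i\tau_i . \]
   Context: Network model: a directed graph $G=(V,E)$; time is slotted. Each link $e$ has capacity $c_e$. Interference is described by a conflict graph on the links; $\mathcal{M}$ is the set of feasible activation sets. Flow $f_i$ has a fixed route $\mathcal{T}^{(i)}$, deterministic fluid arrival rate $\lambda_i>0$ (exactly $\lambda_i$ units arrive at the source in each slot $0\le t\le T$), and deadline $\tau_i$: a packet meets its deadline if delivered to its destination within $\tau_i$ slots of its arrival. Each link $e\in\mathcal{T}^{(i)}$ reserves a slice $w_{i,e}$ for $f_i$ with its own first-come-first-served queue, of size $Q_{i,e}(t)$ at the beginning of slot $t$ (all queues initially empty). A policy $\pi$ chooses $\mu^\pi(t)\in\mathcal{M}$ each slot; admissible policies respect interference and are work-conserving (an activated link serves $\min\{Q_{i,e}(t),w_{i,e}\}$ from each slice queue; served units join the next link's queue in the next slot or are delivered at the last link). A policy is cyclic with period $K^\pi$ if $\mu^\pi(t)=\mu^\pi(t+K^\pi)$ for all $t\ge 0$. *)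

(* Defs.v *)
From HB Require Import structures.
From mathcomp Require Import all_boot all_order all_algebra.
Set Implicit Arguments. Unset Strict Implicit. Unset Printing Implicit Defensive.
Import Order.TTheory GRing.Theory Num.Theory.
Local Open Scope ring_scope.

Section Model.
Variables (R : realFieldType) (V E : finType).

Definition is_route (src dst : E -> V) (r : seq E) : bool :=
  if r is e0 :: r' then path (fun e e' => dst e == src e') e0 r' && uniq r
  else false.

Definition feasible (conflict : rel E) : {set {set E}} :=
  [set S : {set E} | [forall e in S, forall e' in S, ~~ conflict e e']].

Definition admissible (conflict : rel E) (mu : nat -> {set E}) : Prop :=
  forall t, mu t \in feasible conflict.

Definition cyclic (mu : nat -> {set E}) : Prop :=
  exists K : nat, (0 < K)%N /\ forall t, mu (t + K)%N = mu t.

(* Q t e is the size of the slice queue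
   of the flow at link e at the beginning of slot t (0 for e not on r).
   In slot t an activated link e of the route serves min(Q t e, w e)
   (work conservation); served units join the next link's queue at slot
   t+1; the lam units arriving at the source during slot t join the queue
   of the first link at slot t+1. *)
Fixpoint Qf (r : seq E) (lam : R) (w : E -> R) (mu : nat -> {set E})
    (t : nat) (e : E) {struct t} : R :=
  match t with
  | 0 => 0
  | t'.+1 =>
      let q := Qf r lam w mu t' in
      let srv f := if (f \in r) && (f \in mu t') then Num.min (q f) (w f) else 0 in
      if e \in r then
        q e - srv e + (if index e r == 0%N then lam else srv (nth e r (index e r).-1))
      else 0
  end.

Definition served (r : seq E) (lam : R) (w : E -> R) (mu : nat -> {set E})
    (t : nat) (e : E) : R :=
  if (e \in r) && (e \in mu t) then Num.min (Qf r lam w mu t e) (w e) else 0.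

Definition delivered (r : seq E) (lam : R) (w : E -> R) (mu : nat -> {set E})
    (t : nat) : R :=
  if r is e0 :: r' then served r lam w mu t (last e0 r') else 0.

Definition Dcum (r : seq E) (lam : R) (w : E -> R) (mu : nat -> {set E})
    (d : nat) : R :=
  \sum_(s < d.+1) delivered r lam w mu s.

(* Fluid FCFS: the fluid unit at cumulative position x in (lam*s, lam*(s+1)]
   arrived in slot s, and (queues being FCFS along the tandem route) it is
   delivered in the first slot d with x <= Dcum d.  It meets its deadline
   tau iff it is delivered within tau slots of its arrival, i.e. some
   d <= s + tau has x <= Dcum d. *)
Definition meets_deadlines (r : seq E) (lam : R) (tau : nat) (w : E -> R)
    (mu : nat -> {set E}) : Prop :=
  forall (s : nat) (x : R), lam * s%:R < x -> x <= lam * (s.+1)%:R ->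
    exists d : nat, (d <= s + tau)%N /\ x <= Dcum r lam w mu d.

End Model.

(* Main.v *)
Require Import Defs.
From HB Require Import structures.
From mathcomp Require Import all_boot all_order all_algebra ring lra.
Import Order.TTheory GRing.Theory Num.Theory.
Local Open Scope ring_scope.

Section Aux.
Variables (R : realFieldType) (E : finType) (e0 : E) (r' : seq E) (l : R)
  (w : E -> R) (mu : nat -> {set E}).
Hypothesis Hl : 0 <= l.
Hypothesis Hw : forall e, e \in e0 :: r' -> 0 <= w e.
Hypothesis Hu : uniq (e0 :: r').

Lemma Q_ge0 t e : 0 <= Qf (e0 :: r') l w mu t e.
Proof.
elim: t e => [|t IH] e //=.
have srv0 f : 0 <= (if (f \in e0 :: r') && (f \in mu t) then
     Num.min (Qf (e0 :: r') l w mu t f) (w f) else 0).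
  by case: ifP => // /andP[fr _]; rewrite le_min IH Hw.
case: ifP => // er.
rewrite addr_ge0 //; last by case: ifP.
rewrite subr_ge0; case: ifP => // _; rewrite ge_min lexx //.
Qed.

Lemma deliv_ge0 t : 0 <= delivered (e0 :: r') l w mu t.
Proof.
rewrite /delivered /served; case: ifP => // /andP[fr _].
by rewrite le_min Q_ge0 Hw.
Qed.

Lemma sumQ_step t :
  \sum_(e <- e0 :: r') Qf (e0 :: r') l w mu t.+1 e =
  \sum_(e <- e0 :: r') Qf (e0 :: r') l w mu t e + l - delivered (e0 :: r') l w mu t.
Proof.
set r := e0 :: r'.
pose q := Qf r l w mu t.
pose srv f := if (f \in r) && (f \in mu t) then Num.min (q f) (w f) else 0.
have E1 : \sum_(e <- r) Qf r l w mu t.+1 e = \sum_(e <- r) (q e - srv e +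
   (if index e r == 0%N then l else srv (nth e0 r (index e r).-1))).
  rewrite big_seq [RHS]big_seq; apply: eq_bigr => e er.
  change (Qf r l w mu t.+1 e) with (if e \in r then q e - srv e +
   (if index e r == 0%N then l else srv (nth e r (index e r).-1)) else 0).
  rewrite er; case: ifP => // _.
  rewrite (set_nth_default e0 e) //.
  by rewrite (leq_ltn_trans (leq_pred _)) // index_mem.
rewrite E1 !big_split /= sumrN.
rewrite [X in _ - X + _ = _](big_nth e0) [X in _ + X = _](big_nth e0) /=.
rewrite big_nat_recr //= big_nat_recl //=.
have -> : \sum_(0 <= i < size r') (if index (nth e0 r i.+1) r == 0%N then l
     else srv (nth e0 r (index (nth e0 r i.+1) r).-1)) =
     \sum_(0 <= i < size r') srv (nth e0 r i).
  rewrite big_nat_cond [RHS]big_nat_cond; apply: eq_bigr => i /andP[/andP[_ Hi] _].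
  by rewrite index_uniq.
rewrite eqxx /=.
have -> : nth e0 r (size r') = last e0 r' by rewrite (last_nth e0).
rewrite /served -/q -/(srv _).
rewrite /q; lra.
Qed.
Lemma sumQ_form t :
  \sum_(e <- e0 :: r') Qf (e0 :: r') l w mu t e =
  l * t%:R - \sum_(s < t) delivered (e0 :: r') l w mu s.
Proof.
elim: t => [|t IH].
  by rewrite big1 // big_ord0 mulr0 subr0.
rewrite sumQ_step IH big_ord_recr /= -natr1 mulrDr mulr1; lra.
Qed.
End Aux.

Theorem corollary2 (R : realFieldType) (V E F : finType)
    (src dst : E -> V) (c : E -> R) (conflict : rel E)
    (route : F -> seq E) (lam : F -> R) (tau : F -> nat) (w : F -> E -> R)
    (Hconf_sym : symmetric conflict) (Hconf_irr : irreflexive conflict)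
    (Hroute : forall j, is_route src dst (route j))
    (Hlam : forall j, 0 < lam j)
    (Hw : forall j e, e \in route j -> 0 <= w j e)
    (Hcap : forall e, \sum_(j | e \in route j) w j e <= c e)
    (mu : nat -> {set E})
    (Hadm : admissible conflict mu) (Hcyc : cyclic mu)
    (i : F) :
  meets_deadlines (route i) (lam i) (tau i) (w i) mu <->
  (forall T : nat, forall t : nat, (t <= T)%N ->
     \sum_(e <- route i) Qf (route i) (lam i) (w i) mu t e <= lam i * (tau i)%:R).
Proof.
have Hw' := Hw i; have Hl := Hlam i.
move: (Hroute i) Hw'; rewrite /meets_deadlines /Dcum.
case: (route i) => [|e0 r'] // /andP[_ Hu] Hw'.
set D := fun t => \sum_(s < t) delivered (e0 :: r') (lam i) (w i) mu s.
have Dge0 t : 0 <= D t.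
  by rewrite /D; apply: sumr_ge0 => s _; apply: deliv_ge0 => //; exact: ltW.
have Dmono m k : D m <= D (m + k)%N.
  elim: k => [|k IH]; first by rewrite addn0.
  rewrite addnS /D big_ord_recr /=; apply: (le_trans IH); rewrite lerDl.
  by apply: deliv_ge0 => //; exact: ltW.
have Dmono' m n : (m <= n)%N -> D m <= D n.
  by move=> /subnKC <-; apply: Dmono.
split.
- move=> Hd T t _; rewrite (@sumQ_form _ _ _ _ _ _ _ Hu) -/(D t).
  case: (leqP t (tau i)) => Ht.
    have : lam i * t%:R <= lam i * (tau i)%:R by rewrite ler_pM2l // ler_nat.
    have := Dge0 t; lra.
  set s := (t - (tau i).+1)%N.
  have Ets : t = (s.+1 + tau i)%N by rewrite /s addSn -addnS subnK.
  have [d [Hd1 Hd2]] := Hd s (lam i * s.+1%:R) 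
     ltac:(by rewrite ltr_pM2l // ltr_nat) (lexx _).
  have : D d.+1 <= D t by apply: Dmono'; rewrite Ets addSn ltnS.
  move: Hd2; rewrite -/(D d.+1).
  rewrite Ets natrD mulrDr; lra.
- move=> H s x Hx1 Hx2; exists (s + tau i)%N; split => //.
  have := H _ (s + tau i).+1 (leqnn _).
  rewrite (@sumQ_form _ _ _ _ _ _ _ Hu) -/(D _) -addSn natrD mulrDr.
  move: Hx2; rewrite -/(D _); lra.
Qed.
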